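(* There exists a Fraïssé sequence $F\colon\omega\to\mathbf{FinGame}_{emb}$, and the colimit of $F$ in $\mathbf{Games}_A$ is (isomorphic to) $G_{FL}=(\omega^{<\omega},c_{00}(\omega))$.
   Context: Finite sequences, game trees, runs: for a set $M$, $M^{<\omega}=\bigcup_n M^n$, $|t|$ is the length, $t\restriction k$ the initial segment of length $k$, $t^\frown x$ the one-step extension. A game tree is $T\subseteq M^{<\omega}$ closed under initial segments in which every $t$ has an extension $t^\frown x\in T$; $\mathrm{Run}(T)=\{R\in M^\omega: R\restriction n\in T\ \forall n\}$. A game is $G=(T,A)$ with $A\subseteq \mathrm{Run}(T)$; it is finite if $\mathrm{Run}(T)$ is finite. A chronological map $f\colon T_1\to T_2$ satisfies $|f(t)|=|t|$ and $f(t\restriction k)=f(t)\restriction k$; it induces $\bar f$ on runs with $\bar f(R)\restriction n=f(R\restriction n)$. An A-morphism $(T_1,A_1)\to(T_2,A_2)$ is a chronological $f$ with $\bar f[A_1]\subseteq A_2$; a game embedding is an injective chronological $f$ with $\bar f(R)\in A_2\iff R\in A_1$ for all $R\in\mathrm{Run}(T_1)$. $\mathbf{Games}_A$ is the category of games and A-morphisms (it has colimits of $\omega$-sequences); $\mathbf{FinGame}_{emb}$ is the category of finite games and game embeddings. The ordinal $\omega$ is regarded as a category with a unique morphism $n\to m$ iff $n\le m$; for a functor $F$ on $\omega$ write $F_n^m=F(n\le m)$. A Fraïssé sequence in $\mathbf{FinGame}_{emb}$ is a functor $F\colon\omega\to\mathbf{FinGame}_{emb}$ such that (U) for every finite game $X$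 there are $n$ and a game embedding $X\to F(n)$, and (A) for every $n$ and every game embedding $f\colon F(n)\to X$ with $X$ finite there are $m\ge n$ and a game embedding $g\colon X\to F(m)$ with $g\circ f=F_n^m$. $c_{00}(\omega)$ is the set of eventually zero sequences in $\omega^\omega$. *)

(* Defs.v *)
From mathcomp Require Import all_boot.
Set Implicit Arguments. Unset Strict Implicit. Unset Printing Implicit Defensive.

(* t |> k  is  take k t ;  t ^ x  is  rcons t x ;  R |> n  is  mkseq R n. *)

Definition is_run (M : Type) (T : seq M -> Prop) (R : nat -> M) : Prop :=
  forall n, T (mkseq R n).

Record game := Game {
  gM : Type;
  gT : seq gM -> Prop;
  gA : (nat -> gM) -> Prop;
  gT_nil : gT [::];
  gT_prefix : forall t k, gT t -> gT (take k t);
  gT_ext : forall t, gT t -> exists x, gT (rcons t x);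
  gA_run : forall R, gA R -> is_run gT R
}.

Definition finite_game (G : game) : Prop :=
  exists (N : nat) (r : nat -> nat -> gM G),
    forall R, is_run (@gT G) R -> exists i, i < N /\ forall k, R k = r i k.

(** Chronological maps T1 -> T2 (given as functions on sequences, only their
    behaviour on T1 matters). *)
Definition chronological (G1 G2 : game) (f : seq (gM G1) -> seq (gM G2)) : Prop :=
  forall t, gT t ->
    [/\ gT (f t), size (f t) = size t & forall k, f (take k t) = take k (f t)].

Definition induced_run (G1 G2 : game) (f : seq (gM G1) -> seq (gM G2))
  (R : nat -> gM G1) (S : nat -> gM G2) : Prop :=
  forall n, f (mkseq R n) = mkseq S n.

Definition A_morphism (G1 G2 : game) (f : seq (gM G1) -> seq (gM G2)) : Prop :=
  chronological f /\
  forall R S, gA R -> induced_run f R S -> gA S.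

Definition game_embedding (G1 G2 : game) (f : seq (gM G1) -> seq (gM G2)) : Prop :=
  [/\ chronological f,
      (forall t t', gT t -> gT t' -> f t = f t' -> t = t') &
      forall R S, is_run (@gT G1) R -> induced_run f R S -> (gA S <-> gA R)].

Definition mor_eq (G1 G2 : game) (f g : seq (gM G1) -> seq (gM G2)) : Prop :=
  forall t, @gT G1 t -> f t = g t.

(** A functor F : omega -> FinGame_emb ; Fm n m is F_n^m (meaningful for n <= m). *)
Record omega_seq := OmegaSeq {
  Fo : nat -> game;
  Fm : forall n m : nat, seq (gM (Fo n)) -> seq (gM (Fo m));
  Fo_finite : forall n, finite_game (Fo n);
  Fm_emb : forall n m, n <= m -> game_embedding (@Fm n m);
  Fm_id : forall n, mor_eq (@Fm n n) id;
  Fm_comp : forall n m k, n <= m -> m <= k ->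
    mor_eq (@Fm n k) (fun t => @Fm m k (@Fm n m t))
}.

Definition fraisse (F : omega_seq) : Prop :=
  (forall X : game, finite_game X ->
     exists n (f : seq (gM X) -> seq (gM (Fo F n))), game_embedding f) /\
  (forall n (X : game) (f : seq (gM (Fo F n)) -> seq (gM X)),
     finite_game X -> game_embedding f ->
     exists m (g : seq (gM X) -> seq (gM (Fo F m))),
       [/\ n <= m, game_embedding g &
           mor_eq (fun t => g (f t)) (@Fm F n m)]).

Definition cocone (F : omega_seq) (G : game)
  (c : forall n, seq (gM (Fo F n)) -> seq (gM G)) : Prop :=
  (forall n, A_morphism (c n)) /\
  (forall n m, n <= m -> mor_eq (fun t => c m (@Fm F n m t)) (c n)).

Definition is_colimit (F : omega_seq) (G : game)
  (c : forall n, seq (gM (Fo F n)) -> seq (gM G)) : Prop :=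
  cocone c /\
  forall (H : game) (d : forall n, seq (gM (Fo F n)) -> seq (gM H)),
    cocone d ->
    (exists u : seq (gM G) -> seq (gM H),
        A_morphism u /\ forall n, mor_eq (fun t => u (c n t)) (d n)) /\
    (forall u v : seq (gM G) -> seq (gM H),
        A_morphism u -> A_morphism v ->
        (forall n, mor_eq (fun t => u (c n t)) (d n)) ->
        (forall n, mor_eq (fun t => v (c n t)) (d n)) ->
        mor_eq u v).

Definition c00 (R : nat -> nat) : Prop := exists N, forall n, N <= n -> R n = 0.

Lemma GFL_nil : (fun _ : seq nat => True) [::]. Proof. by []. Qed.
Lemma GFL_prefix : forall (t : seq nat) k, (fun _ => True) t -> (fun _ : seq nat => True) (take k t).
Proof. by []. Qed.
Lemma GFL_ext : forall t : seq nat, (fun _ => True) t -> exists x, (fun _ : seq nat => True) (rcons t x).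
Proof. by move=> t _; exists 0. Qed.
Lemma GFL_run : forall R, c00 R -> is_run (fun _ : seq nat => True) R.
Proof. by []. Qed.

Definition G_FL : game := @Game nat (fun _ => True) c00 GFL_nil GFL_prefix GFL_ext GFL_run.

(* Main.v *)
Require Import Defs.
From mathcomp Require Import all_boot.
From Stdlib Require Import ClassicalEpsilon FunctionalExtensionality Classical.
From mathcomp Require Import zify.
Set Implicit Arguments. Unset Strict Implicit. Unset Printing Implicit Defensive.


Lemma take_mkseq (T : Type) (f : nat -> T) k n : take k (mkseq f n) = mkseq f (minn k n).
Proof. by rewrite /mkseq -map_take take_iota. Qed.

Lemma mkseq_ext (T : Type) (f g : nat -> T) : (forall n, mkseq f n = mkseq g n) -> forall k, f k = g k.
Proof.
move=> H k; have := congr1 (nth (f k) ^~ k) (H k.+1).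
by rewrite !nth_mkseq.
Qed.

Definition Tn (m : nat) (t : seq nat) : Prop :=
  (forall k, k < size t -> nth 0 t k < m.+2) /\
  ((forall k, m <= k < size t -> nth 0 t k = 0) \/ (forall k, m <= k < size t -> nth 0 t k = 1)).

Lemma Tn_nil m : Tn m [::].
Proof. split=> [k //|]; by left=> k /andP[_]. Qed.

Lemma Tn_take m t k : Tn m t -> Tn m (take k t).
Proof.
move=> [H1 H2]; split.
  move=> j; rewrite size_take_min leq_min => /andP[jk jt]; rewrite nth_take //; exact: H1.
case: H2 => H; [left|right] => j /andP[mj]; rewrite size_take_min leq_min => /andP[jk jt];
  rewrite nth_take //; apply: H; by rewrite mj.
Qed.

Lemma Tn_ext m t : Tn m t -> exists x, Tn m (rcons t x).
Proof.
move=> [H1 H2].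
case: (ltnP (size t) m) => hs.
  exists 0; split.
    move=> k; rewrite size_rcons ltnS nth_rcons leq_eqVlt => /orP[/eqP->|kt].
      by rewrite ltnn eqxx.
    rewrite kt; exact: H1.
  left=> k /andP[mk]; rewrite size_rcons ltnS => kt.
  by move: (leq_ltn_trans (leq_trans mk kt) hs); rewrite ltnn.
case: H2 => H; [exists 0|exists 1]; (split;
  [move=> k; rewrite size_rcons ltnS nth_rcons leq_eqVlt => /orP[/eqP->|kt];
    [by rewrite ltnn eqxx | rewrite kt; exact: H1] |]).
  left=> k /andP[mk]; rewrite size_rcons ltnS nth_rcons leq_eqVlt => /orP[/eqP->|kt].
    by rewrite ltnn eqxx.
  rewrite kt; apply: H; by rewrite mk.
right=> k /andP[mk]; rewrite size_rcons ltnS nth_rcons leq_eqVlt => /orP[/eqP->|kt].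
  by rewrite ltnn eqxx.
rewrite kt; apply: H; by rewrite mk.
Qed.

Lemma Tn_mono n m t : n <= m -> Tn n t -> Tn m t.
Proof.
move=> nm [H1 H2]; split.
  move=> k kt; apply: leq_trans (H1 k kt) _; by rewrite ltnS ltnS.
case: H2 => H; [left|right] => k /andP[mk kt]; apply: H; by rewrite (leq_trans nm mk).
Qed.

Definition An (m : nat) (R : nat -> nat) : Prop := is_run (Tn m) R /\ c00 R.

Lemma An_run m R : An m R -> is_run (Tn m) R.
Proof. by case. Qed.

Definition Fgame (m : nat) : game :=
  @Game nat (Tn m) (An m) (Tn_nil m) (fun t k H => Tn_take k H) (@Tn_ext m) (@An_run m).

Lemma run_Tn m R : is_run (Tn m) R ->
  (forall k, R k < m.+2) /\ (forall k, m <= k -> R k = R m).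
Proof.
move=> H; split.
  move=> k; have [H1 _] := H k.+1; have := H1 k; rewrite size_mkseq nth_mkseq //; by apply.
move=> k mk; have [_ H2] := H k.+1.
have km : k < k.+1 by [].
have mm : m < k.+1 by rewrite ltnS.
case: H2 => H2.
  rewrite -(nth_mkseq 0 R km) -(nth_mkseq 0 R mm) !H2 // size_mkseq ?mk ?leqnn ?mm //.
rewrite -(nth_mkseq 0 R km) -(nth_mkseq 0 R mm) !H2 // size_mkseq ?mk ?leqnn ?mm //.
Qed.

Lemma run_Tn01 m R : is_run (Tn m) R -> R m = 0 \/ R m = 1.
Proof.
move=> H; have [_ H2] := H m.+1.
have mm : m < m.+1 by [].
rewrite -(nth_mkseq 0 R mm).
case: H2 => H2; [left|right]; apply: H2; by rewrite leqnn size_mkseq.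
Qed.

Lemma fin_cover (P : (nat -> nat) -> Prop) n L :
  (forall R, P R -> forall k, k <= n -> R k <= L) ->
  (forall R R', P R -> P R' -> (forall k, k <= n -> R k = R' k) -> forall k, R k = R' k) ->
  exists N (r : nat -> nat -> nat), forall R, P R -> exists i, i < N /\ forall k, R k = r i k.
Proof.
move=> Hb Hd.
pose T := {ffun 'I_n.+1 -> 'I_L.+1}.
pose enc (R : nat -> nat) : T := [ffun k : 'I_n.+1 => inord (R k)].
pose r i := epsilon (inhabits (fun _ => 0))
  (fun R => P R /\ enc R = nth (enc (fun _ => 0)) (enum T) i).
exists #|T|, r => R PR.
exists (index (enc R) (enum T)); split.
  by rewrite cardE index_mem mem_enum.
have : exists R', P R' /\ enc R' = nth (enc (fun _ => 0)) (enum T) (index (enc R) (enum T)).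
  by exists R; rewrite nth_index ?mem_enum.
move/(epsilon_spec (inhabits (fun _ => 0))); rewrite -/(r _).
move=> [PR' E]; rewrite nth_index ?mem_enum // in E.
apply (Hd _ _ PR PR') => k lek.
have := congr1 (fun f : T => nat_of_ord (f (inord k))) E.
have kn : k < n.+1 by rewrite ltnS.
have h1 : R k < L.+1 by rewrite ltnS; apply: Hb.
have h2 : r (index (enc R) (enum T)) k < L.+1 by rewrite ltnS; apply: Hb.
by rewrite /= !ffunE (@inordK n k kn) (inordK h1) (inordK h2).
Qed.

Lemma Fgame_finite m : finite_game (Fgame m).
Proof.
rewrite /finite_game /=.
have := @fin_cover (is_run (Tn m)) m m.+1.
case.
- move=> R HR k _; have [H1 _] := run_Tn HR; exact: H1.
- move=> R R' HR HR' E k.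
  have [_ H2] := run_Tn HR; have [_ H2'] := run_Tn HR'.
  case: (leqP m k) => mk; last by apply: E; exact: ltnW.
  by rewrite H2 // H2' // E.
move=> N [r H]; by exists N, r.
Qed.

Definition maxl (t : seq nat) := foldr maxn 0 t.

Lemma maxl_ge t a : a \in t -> a <= maxl t.
Proof.
elim: t => [//|b t IH]; rewrite inE /= => /orP[/eqP->|/IH h].
  exact: leq_maxl.
exact: leq_trans h (leq_maxr _ _).
Qed.

Lemma Tn_idx t : Tn (size t + maxl t) t.
Proof.
split.
  move=> k kt; have := maxl_ge (mem_nth 0 kt) => h.
  by rewrite ltnS (leq_trans h) // leqW // leq_addl.
left=> k /andP[h1 h2]; have := leq_ltn_trans (leq_trans (leq_addr _ _) h1) h2.
by rewrite ltnn.
Qed.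

Lemma c00_run R : c00 R -> exists M, is_run (Tn M) R.
Proof.
move=> [N0 HN]; exists (N0 + maxl (mkseq R N0)) => k; split.
  move=> j; rewrite size_mkseq => jk; rewrite nth_mkseq //.
  case: (ltnP j N0) => jN.
    have jN' : j < size (mkseq R N0) by rewrite size_mkseq.
    have := maxl_ge (mem_nth 0 jN'); rewrite nth_mkseq // => h.
    by rewrite ltnS (leq_trans h) // leqW // leq_addl.
  by rewrite HN.
left=> j /andP[h1 h2]; rewrite size_mkseq in h2; rewrite nth_mkseq // HN //.
exact: leq_trans (leq_addr _ _) h1.
Qed.

Lemma Fm_emb_id n m : n <= m -> game_embedding (G1 := Fgame n) (G2 := Fgame m) (fun t => t).
Proof.
move=> nm; split.
- move=> t /= Ht; split=> //; exact: Tn_mono Ht.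
- by [].
- move=> R S /= HR HS.
  have E : forall k, R k = S k by apply: mkseq_ext.
  rewrite /An; split.
    move=> [_ [N0 HN]]; split=> //; exists N0 => k /HN; by rewrite E.
  move=> [_ [N0 HN]]; split.
    move=> k; rewrite -HS; exact: Tn_mono (HR k).
  exists N0 => k /HN; by rewrite E.
Qed.

Lemma node_ext (X : game) t : gT t -> exists R, is_run (@gT X) R /\ mkseq R (size t) = t.
Proof.
move=> Tt.
have inh : inhabited (gM X) by case: (gT_ext (gT_nil X)) => x _; exact: inhabits x.
pose x0 := epsilon inh (fun _ => True).
pose step (u : seq (gM X)) := rcons u (epsilon inh (fun x => gT (rcons u x))).
pose node j := iter j step t.
have Hn : forall j, gT (node j).
  elim=> [//|j IH] /=.
  apply: (epsilon_spec inh (fun x => gT (rcons (node j) x))); exact: gT_ext IH.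
have Hs : forall j, size (node j) = size t + j.
  elim=> [|j IH] /=; first by rewrite addn0.
  by rewrite size_rcons -/(node j) IH addnS.
have Hp : forall j i p, p < size (node j) -> nth x0 (node (j + i)) p = nth x0 (node j) p.
  move=> j; elim=> [|i IH] p hp; first by rewrite addn0.
  rewrite addnS /= -/(node (j + i)) nth_rcons.
  have -> : p < size (node (j + i)) by rewrite Hs; rewrite Hs in hp; lia.
  exact: IH.
pose R k := nth x0 (node k.+1) k.
have HR : forall k, mkseq R k = take k (node k).
  move=> k; apply: (@eq_from_nth _ x0).
    by rewrite size_mkseq size_take_min Hs; lia.
  move=> p; rewrite size_mkseq => pk; rewrite nth_mkseq // nth_take //.
  have -> : k = p.+1 + (k - p.+1) by lia.
  by rewrite Hp // Hs; lia.
exists R; split.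
  move=> k; rewrite HR; exact: gT_prefix.
rewrite HR; apply: (@eq_from_nth _ x0).
  by rewrite size_take_min Hs; lia.
move=> p; rewrite size_take_min Hs => hp; rewrite nth_take; last by lia.
have -> : size t = 0 + size t by [].
rewrite Hp //= ?add0n //; lia.
Qed.

Lemma ev_bound N (Q : nat -> nat -> Prop) :
  (forall i, i < N -> exists D, forall D', D <= D' -> Q i D') ->
  exists D, forall i, i < N -> forall D', D <= D' -> Q i D'.
Proof.
elim: N => [|N IH] H; first by exists 0.
have [D1 H1] := IH (fun i hi => H i (leqW hi)).
have [D2 H2] := H N (ltnSn N).
exists (maxn D1 D2) => i; rewrite ltnS leq_eqVlt => /orP[/eqP->|hi] D' hD.
  apply: H2; lia.
apply: H1 => //; lia.
Qed.

Lemma extend (X : game) (n : nat) (Img : seq (gM X) -> Prop) (h : seq (gM X) -> seq nat) :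
  finite_game X ->
  (forall u k, Img u -> Img (take k u)) ->
  (forall u, Img u -> Tn n (h u) /\ size (h u) = size u) ->
  (forall u k, Img u -> h (take k u) = take k (h u)) ->
  (forall u u', Img u -> Img u' -> h u = h u' -> u = u') ->
  (forall R S, is_run (@gT X) R -> (forall k, Img (mkseq R k)) ->
      (forall k, h (mkseq R k) = mkseq S k) -> (gA R <-> c00 S)) ->
  exists m (g : seq (gM X) -> seq nat), n <= m /\
     game_embedding (G1 := X) (G2 := Fgame m) g /\ forall u, Img u -> g u = h u.
Proof.
move=> [N [r Hr]] Hpre Hh Hht Hinj Hrun.
have node_run : forall t, @gT X t -> exists i, i < N /\ is_run (@gT X) (r i) /\ mkseq (r i) (size t) = t.
  move=> t /node_ext [R [HR Et]]; have [i [iN Ei]] := Hr R HR; exists i; split => //.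
  have E : forall k, mkseq R k = mkseq (r i) k by move=> k; apply: eq_mkseq.
  split; [move=> k; rewrite -E; exact: HR | by rewrite -E].
have [D HD] : exists D, forall i, i < N -> forall D', D <= D' ->
   (forall j, j < N -> mkseq (r i) D' = mkseq (r j) D' -> forall k, r i k = r j k) /\
   ((forall k, Img (mkseq (r i) k)) \/ ~ Img (mkseq (r i) D')).
  apply: ev_bound => i iN.
  have [D1 H1] : exists D1, forall D', D1 <= D' -> forall j, j < N ->
      mkseq (r i) D' = mkseq (r j) D' -> forall k, r i k = r j k.
    have := @ev_bound N (fun j D' => mkseq (r i) D' = mkseq (r j) D' -> forall k, r i k = r j k).
    case.
    - move=> j jN; case: (classic (forall k, r i k = r j k)) => H.
        by exists 0 => *; exact: H.
      have [k0 Hk0] := not_all_ex_not _ _ H.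
      exists k0.+1 => D' hD E; exfalso; apply: Hk0.
      by have := congr1 (nth (r i k0) ^~ k0) E; rewrite !nth_mkseq.
    - by move=> D1 H1; exists D1 => D' hD j jN; exact: H1.
  have [D2 H2] : exists D2, forall D', D2 <= D' ->
      (forall k, Img (mkseq (r i) k)) \/ ~ Img (mkseq (r i) D').
    case: (classic (forall k, Img (mkseq (r i) k))) => H.
      by exists 0 => *; left.
    have [k0 Hk0] := not_all_ex_not _ _ H.
    exists k0 => D' hD; right => HI; apply: Hk0.
    by have := Hpre _ k0 HI; rewrite take_mkseq (minn_idPl hD).
  exists (maxn D1 D2) => D' hD; split.
    apply: H1; lia.
  apply: H2; lia.
pose idx (u : seq (gM X)) : nat := epsilon (inhabits 0)
  (fun i => i < N /\ is_run (@gT X) (r i) /\ mkseq (r i) (size u) = u).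
have Hidx : forall u, @gT X u -> idx u < N /\ is_run (@gT X) (r (idx u)) /\ mkseq (r (idx u)) (size u) = u.
  move=> u Hu; apply: (epsilon_spec (inhabits 0)
    (fun i => i < N /\ is_run (@gT X) (r i) /\ mkseq (r i) (size u) = u)); exact: node_run.
pose B := n.+2.
pose phi (u : seq (gM X)) : nat :=
  if excluded_middle_informative (Img u) then last 0 (h u)
  else if size u <= D then B + idx u
  else (if excluded_middle_informative (gA (r (idx u))) then 0 else 1).
pose g (t : seq (gM X)) := mkseq (fun k => phi (take k.+1 t)) (size t).
pose m := maxn (maxn n D) (B + N).
have nm : n <= m by lia.
have Dm : D <= m by lia.
have BNm : B + N <= m by lia.
exists m, g.
have g_size : forall t, size (g t) = size t by move=> t; rewrite size_mkseq.
have g_nth : forall t k, k < size t -> nth 0 (g t) k = phi (take k.+1 t).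
  by move=> t k kt; rewrite nth_mkseq.
have g_take : forall t k, g (take k t) = take k (g t).
  move=> t k; apply: (@eq_from_nth _ 0).
    by rewrite g_size !size_take_min g_size.
  move=> j; rewrite g_size size_take_min => hj.
  have jk : j < k by lia.
  have jt : j < size t by lia.
  rewrite g_nth ?size_take_min; last by lia.
  by rewrite nth_take // g_nth // take_takel.
have g_img : forall u, Img u -> g u = h u.
  move=> u Iu; have [Tu Su] := Hh u Iu; apply: (@eq_from_nth _ 0).
    by rewrite g_size Su.
  move=> k; rewrite g_size => ku; rewrite g_nth // /phi.
  case: excluded_middle_informative => [I'|NI]; last by case: NI; apply: Hpre.
  rewrite Hht // -nth_last size_take_min Su (minn_idPl ku) /= nth_take //.
have KeyB : forall u k, @gT X u -> ~ Img u -> D <= k -> k <= size u -> ~ Img (take k u).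
  move=> u k Tu NI Dk ku Ik.
  have [iN [_ Eu]] := Hidx u Tu.
  have E2 : take k u = mkseq (r (idx u)) k by rewrite -{1}Eu take_mkseq (minn_idPl ku).
  have [_ Hb] := HD _ iN k Dk.
  case: Hb => [Hall|Hn]; first by apply: NI; rewrite -Eu; exact: Hall.
  by apply: Hn; rewrite -E2.
have KeyA : forall u v, @gT X u -> @gT X v -> D <= size u -> take (size u) v = u ->
    forall k, r (idx u) k = r (idx v) k.
  move=> u v Tu Tv Du E.
  have [iN [_ Eu]] := Hidx u Tu; have [jN [_ Ev]] := Hidx v Tv.
  have su : size u <= size v by rewrite -{1}E size_take_min geq_minr.
  have [Ha _] := HD _ iN (size u) Du.
  apply: Ha jN _.
  have E2 : take (size u) (mkseq (r (idx v)) (size v)) = mkseq (r (idx v)) (size u)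
    by rewrite take_mkseq (minn_idPl su).
  rewrite Ev in E2.
  by rewrite Eu -E2 E.

have g_T : forall t, @gT X t -> Tn m (g t).
  move=> t Tt; case: (classic (Img t)) => It.
    rewrite g_img //; exact: Tn_mono nm (proj1 (Hh t It)).
  split.
    move=> k; rewrite g_size => kt; rewrite g_nth // /phi.
    have Tu := gT_prefix k.+1 Tt.
    case: excluded_middle_informative => [I|NI].
      have [[Hl _] Su] := Hh _ I.
      have su : size (h (take k.+1 t)) = k.+1 by rewrite Su size_take_min (minn_idPl kt).
      rewrite -nth_last su /=.
      have := Hl k; rewrite su => H; have := H (ltnSn k); lia.
    case: ifP => sD.
      have [iN _] := Hidx _ Tu; lia.
    case: excluded_middle_informative => [?|?] /=; lia.
  have tail : forall k, m <= k < size t ->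
      nth 0 (g t) k = (if excluded_middle_informative (gA (r (idx t))) then 0 else 1).
    move=> k /andP[mk kt]; rewrite g_nth // /phi.
    have Tu := gT_prefix k.+1 Tt.
    case: (excluded_middle_informative (Img (take k.+1 t))) => [I|NI] /=.
      by exfalso; apply: (KeyB t k.+1 Tt It) => //; lia.
    rewrite size_take_min (minn_idPl kt).
    case: ifP => [sD|_]; first by lia.
    have E := KeyA (take k.+1 t) t Tu Tt.
    rewrite size_take_min (minn_idPl kt) in E.
    have E' := E ltac:(lia) erefl.
    by rewrite (functional_extensionality _ _ E').
  move: tail; case: excluded_middle_informative => [? tail|? tail]; [left|right] => k; rewrite g_size => hk; by rewrite tail.
have sib : forall u u' k, @gT X u -> @gT X u' -> size u = k.+1 -> size u' = k.+1 ->
    take k u = take k u' -> phi u = phi u' -> u = u'.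
  move=> u u' k Tu Tu' su su' Et Ephi.
  case: (classic (u = u')) => // Neq; exfalso.
  have Tk : @gT X (take k u) by exact: gT_prefix.
  have sk : size (take k u) = k by rewrite size_take_min su; lia.
  move: Ephi; rewrite /phi.
  case: (excluded_middle_informative (Img u)) => [Iu|NIu]; case: (excluded_middle_informative (Img u')) => [Iu'|NIu'] /=.
  - move=> El; apply: Neq; apply: Hinj => //.
    have [_ Su] := Hh u Iu; have [_ Su'] := Hh u' Iu'.
    apply: (@eq_from_nth _ 0); first by rewrite Su Su' su su'.
    move=> p; rewrite Su su ltnS leq_eqVlt => /orP[/eqP->|pk].
      have e1 : nth 0 (h u) k = last 0 (h u) by rewrite -nth_last Su su.
      have e2 : nth 0 (h u') k = last 0 (h u') by rewrite -nth_last Su' su'.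
      by rewrite e1 e2.
    have ht := Hht u k Iu; have ht' := Hht u' k Iu'.
    by rewrite -(nth_take 0 pk (h u)) -(nth_take 0 pk (h u')) -ht -ht' Et.
  - have Iu'k : Img (take k u') by rewrite -Et; exact: Hpre.
    have kD : k < D.
      case: (ltnP k D) => // Dk; exfalso.
      by apply: (KeyB u' k Tu' NIu' Dk) => //; rewrite su'.
    rewrite su' ifT; last by lia.
    have [[Hl _] Su] := Hh u Iu.
    have := Hl k; rewrite -nth_last Su su /= => H; have := H (ltnSn k); lia.
  - have Iuk : Img (take k u) by rewrite Et; exact: Hpre.
    have kD : k < D.
      case: (ltnP k D) => // Dk; exfalso.
      by apply: (KeyB u k Tu NIu Dk) => //; rewrite su.
    rewrite su ifT; last by lia.
    have [[Hl _] Su] := Hh u' Iu'.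
    have := Hl k; rewrite -nth_last Su su' /= => H; have := H (ltnSn k); lia.
  - rewrite su su'.
    have [iN [_ Eu]] := Hidx u Tu; have [jN [_ Eu']] := Hidx u' Tu'.
    case: ifP => sD.
      move=> /eqP; rewrite eqn_add2l => /eqP Ei.
      by apply: Neq; rewrite -Eu -Eu' Ei su su'.
    move=> _.
    have Dk : D <= size (take k u) by rewrite sk; lia.
    have E1 := KeyA _ _ Tk Tu Dk; rewrite sk in E1.
    have E2 := KeyA _ _ Tk Tu' Dk; rewrite sk Et in E2.
    have E1' := E1 (erefl _); rewrite -Et in E2; have E2' := E2 (erefl _).
    apply: Neq; rewrite -Eu -Eu' su su'; apply: eq_mkseq => p.
    by rewrite -E1' -E2'.
have g_inj : forall t t', @gT X t -> @gT X t' -> g t = g t' -> t = t'.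
  move=> t t' Tt Tt' E.
  have st : size t = size t' by rewrite -g_size E g_size.
  suff H : forall k, k <= size t -> take k t = take k t'.
    by rewrite -(take_size t) H // st take_size.
  elim=> [|k IH] hk; first by rewrite !take0.
  have kt : k < size t by [].
  have kt' : k < size t' by rewrite -st.
  apply: (sib _ _ k); try exact: gT_prefix.
  - by rewrite size_take_min; lia.
  - by rewrite size_take_min; lia.
  - by rewrite !take_takel // IH // ltnW.
  - by rewrite -g_nth // -g_nth // E.
split; first exact: nm.
split; last exact: g_img.
split; last first.
  move=> R S HR HS.
  have Srun : is_run (Tn m) S by move=> k; rewrite -HS; apply: g_T; exact: HR.
  have Sk : forall k, S k = phi (mkseq R k.+1).
    move=> k; have E : nth 0 (g (mkseq R k.+1)) k = nth 0 (mkseq S k.+1) k by rewrite HS.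
    have kk : k < size (mkseq R k.+1) by rewrite size_mkseq.
    rewrite (g_nth _ _ kk) take_mkseq minnn nth_mkseq // in E.
  rewrite /= /An.
  case: (classic (forall k, Img (mkseq R k))) => HI.
    have := Hrun R S HR HI (fun k => etrans (esym (g_img _ (HI k))) (HS k)).
    tauto.
  have [k0 Hk0] := not_all_ex_not _ _ HI.
  have [i [iN Ei]] := Hr R HR.
  have tail : forall k, maxn D k0 <= k ->
      S k = (if excluded_middle_informative (gA R) then 0 else 1).
    move=> k hk; rewrite Sk /phi.
    have Tt : @gT X (mkseq R k.+1) by exact: HR.
    case: (excluded_middle_informative (Img (mkseq R k.+1))) => [I|NI] /=.
      exfalso; apply: Hk0; have := Hpre _ k0 I; rewrite take_mkseq.
      by rewrite (minn_idPl (_ : k0 <= k.+1)) //; lia.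
    case: ifP => [le|_]; first by move: le; rewrite size_map size_iota; lia.
    have -> : r (idx (mkseq R k.+1)) = R.
      apply: functional_extensionality => p.
      have [jN [_ Et]] := Hidx _ Tt; rewrite size_mkseq in Et.
      have [Ha _] := HD i iN k.+1 ltac:(lia).
      rewrite Ei; symmetry; apply: (Ha _ jN).
      by rewrite Et; apply: eq_mkseq => q; rewrite Ei.
    by [].
  split.
  - move=> [_ [N0 HN0]].
    have := tail (maxn (maxn D k0) N0) ltac:(lia).
    rewrite HN0; last by lia.
    by case: excluded_middle_informative.
  - move=> A; split=> //; exists (maxn D k0) => k hk; rewrite tail //.
    by case: excluded_middle_informative.
  exact: g_inj.
move=> t Tt; split.
- exact: g_T.
- exact: g_size.
- exact: g_take.
Qed.

Definition Fseq : omega_seq :=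
  @OmegaSeq Fgame (fun n m (t : seq nat) => t) Fgame_finite
    (fun n m nm => Fm_emb_id nm) (fun n t _ => erefl) (fun n m k _ _ t _ => erefl).

Lemma Fseq_fraisse : fraisse Fseq.
Proof.
split.
  move=> X finX.
  have [m [g [_ [ge _]]]] := @extend X 0 (fun _ => False) (fun _ => [::]) finX
    (fun _ _ F => F) (fun _ F => False_ind _ F) (fun _ _ F => False_ind _ F)
    (fun _ _ F => False_ind _ F) (fun R S _ HI _ => False_ind _ (HI 0)).
  by exists m, g.
move=> n X f finX [fch finj fA].
pose Img (u : seq (gM X)) := exists s, Tn n s /\ f s = u.
pose h (u : seq (gM X)) := epsilon (inhabits [::]) (fun s => Tn n s /\ f s = u).
have Hs : forall u, Img u -> Tn n (h u) /\ f (h u) = u.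
  by move=> u Iu; apply: (epsilon_spec (inhabits [::]) (fun s => Tn n s /\ f s = u)).
have Hpre : forall u k, Img u -> Img (take k u).
  move=> u k [s [Ts <-]]; exists (take k s); split; first exact: Tn_take.
  by have [_ _ ->] := fch s Ts.
have Hh : forall u, Img u -> Tn n (h u) /\ size (h u) = size u.
  move=> u Iu; have [T1 E] := Hs u Iu; split => //.
  by have [_ <- _] := fch _ T1; rewrite E.
have Hht : forall u k, Img u -> h (take k u) = take k (h u).
  move=> u k Iu; have [T1 E1] := Hs u Iu; have [T2 E2] := Hs _ (Hpre u k Iu).
  apply: finj => //; first exact: Tn_take.
  by have [_ _ ->] := fch _ T1; rewrite E1 E2.
have Hinj : forall u u', Img u -> Img u' -> h u = h u' -> u = u'.
  move=> u u' Iu Iu' E; have [_ E1] := Hs u Iu; have [_ E2] := Hs u' Iu'.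
  by rewrite -E1 -E2 E.
have Hrun : forall R S, is_run (@gT X) R -> (forall k, Img (mkseq R k)) ->
    (forall k, h (mkseq R k) = mkseq S k) -> (gA R <-> c00 S).
  move=> R S HR HI HS.
  have Srun : is_run (Tn n) S by move=> k; rewrite -HS; exact: (Hs _ (HI k)).1.
  have Hind : induced_run (G1 := Fgame n) (G2 := X) f S R.
    by move=> k; rewrite -HS (Hs _ (HI k)).2.
  have := fA S R Srun Hind; rewrite /= /An; tauto.
have [m [g [nm [ge gi]]]] := @extend X n Img h finX Hpre Hh Hht Hinj Hrun.
exists m, g; split=> // t Tt.
have It : Img (f t) by exists t.
rewrite /= gi //; have [T1 E1] := Hs _ It.
by apply: finj.
Qed.

Lemma dI (H : game) (d : forall n, seq (gM (Fo Fseq n)) -> seq (gM H)) :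
  cocone d -> forall a b t, Tn a t -> Tn b t -> d a t = d b t.
Proof.
move=> [_ Hc] a b t Ta Tb.
case: (leqP a b) => ab.
  by rewrite -(Hc a b ab t Ta).
by rewrite -(Hc b a (ltnW ab) t Tb).
Qed.

Lemma Fseq_colimit :
  exists c : forall n, seq (gM (Fo Fseq n)) -> seq (gM G_FL), is_colimit c.
Proof.
exists (fun n (t : seq nat) => t); split.
  split=> // n; split.
    by move=> t Tt; split.
  move=> R S [_ [N0 HN]] HS.
  have E : forall k, R k = S k by apply: mkseq_ext.
  by exists N0 => k /HN; rewrite E.
move=> H d dc.
pose Nt (t : seq nat) := size t + maxl t.
pose u (t : seq nat) := d (Nt t) t.
have uE : forall n t, Tn n t -> u t = d n t.
  by move=> n t Tt; apply: (dI dc) => //; exact: Tn_idx.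
split.
  exists u; split; last by move=> n t Tt; exact: uE.
  split.
    move=> t _; have [dA _] := dc; have [dch _] := dA (Nt t).
    have [T1 S1 K1] := dch t (Tn_idx t).
    split=> // k; transitivity (d (Nt t) (take k t)); [exact: uE (Tn_take k (Tn_idx t)) | exact: K1].
  move=> R S HR HS.
  have [M HM] := c00_run HR.
  have [dA _] := dc; have [_ dAA] := dA M.
  apply: (dAA R S) => //.
  by move=> k; rewrite -(uE M) //.
move=> u1 u2 _ _ H1 H2 t _.
by rewrite (H1 (Nt t) t (Tn_idx t)) (H2 (Nt t) t (Tn_idx t)).
Qed.

Theorem mainTheorem3 :
  exists F : omega_seq, fraisse F /\
    exists c : forall n, seq (gM (Fo F n)) -> seq (gM G_FL), is_colimit c.
Proof.
exists Fseq; split; [exact: Fseq_fraisse | exact: Fseq_colimit].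
Qed.
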